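(* Let $\{(X_i,Y_i)\}_{i=1}^n$ be i.i.d. from a distribution $P$ and let the test point $(X_{n+1},Y_{n+1})$ be drawn from a distribution $Q$ independently of the labeled data, where $\mathrm{d}Q/\mathrm{d}P(x,y) = w(x)$ for a known weight function $w\colon \mathcal{X}\to \mathbb{R}^+$. Let $f$ be a model and $s\colon\mathcal{X}\to\mathbb{R}$ a score function, both fixed (trained independently of these data), and let $L_i = \mathcal{L}(f,X_i,Y_i)\in[0,1]$ for a known risk mapping $\mathcal{L}$, for $i\in[n+1]$. Write $w_i = w(X_i)$ for $i\in[n+1]$ and $\mathcal{M} = \{s(X_i)\}_{i=1}^{n+1}$. For $\ell\in[0,1]$ and $t\in\mathbb{R}$ define $$\mathrm{F}(t;\ell) = \frac{\sum_{i=1}^n w_i L_i \mathbf{1}\{s(X_i)\le t\} + w_{n+1}\,\ell\, \mathbf{1}\{s(X_{n+1})\le t\}}{\sum_{i=1}^{n+1} w_i},\qquad t_\gamma(\ell) = \max\{t\in\mathcal{M}\colon \mathrm{F}(t;\ell)\le\gamma\},$$ with $\max\emptyset = -\infty$, and define the weighted e-value $$E_{\gamma,n+1} = \inf_{\ell\in[0,1]} \left\{ \frac{\mathbf{1}\{s(X_{n+1})\le t_\gamma(\ell)\}\cdot \sum_{i=1}^{n+1} w_i}{\sum_{i=1}^n w_i L_i \mathbf{1}\{s(X_i)\le t_\gamma(\ell)\} + w_{n+1}\,\ell\,\mathbf{1}\{s(X_{n+1})\le t_\gamma(\ell)\}}\right\},$$ with $E_{\gamma,n+1}=0$ when $\inf_{\ell\in[0,1]}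 t_\gamma(\ell) = -\infty$. Then for any fixed constant $\gamma\in(0,1)$, it holds that $\mathbb{E}_Q[L_{n+1}E_{\gamma,n+1}]\le 1$.
   Context: Covariate-shift setting: calibration data i.i.d. from $P$, test data from $Q$ with $\mathrm{d}Q/\mathrm{d}P(x,y)=w(x)$ known. The weighted e-value is used for marginal deployment risk control via the decision $\hat\psi_{n+1}=\mathbf{1}\{E_{\gamma,n+1}\ge 1/\alpha\}$, so that the validity $\mathbb{E}_Q[L_{n+1}E_{\gamma,n+1}]\le 1$ yields $\mathbb{E}_Q[L_{n+1}\hat\psi_{n+1}]\le\alpha$. *)

(* Defs.v *)
From HB Require Import structures.
From mathcomp Require Import all_boot all_order all_algebra.
From mathcomp Require Import all_classical all_reals all_analysis.
Set Implicit Arguments. Unset Strict Implicit. Unset Printing Implicit Defensive.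
Import Order.TTheory GRing.Theory Num.Theory.
Local Open Scope classical_set_scope.
Local Open Scope ring_scope.

Section WeightedEvalue.
Context {R : realType} {d1 d2 : measure_display}
  {X : measurableType d1} {Y : measurableType d2}.
Variables (w : X -> R) (s : X -> R) (loss : X -> Y -> R) (gamma : R)
  (n : nat) (zc : 'I_n -> X * Y) (zt : X * Y).

Definition Lc (i : 'I_n) : R := loss (zc i).1 (zc i).2.
Definition wc (i : 'I_n) : R := w (zc i).1.
Definition wt : R := w zt.1.
Definition wsum : R := \sum_(i < n) wc i + wt.
Definition ind (x : X) (t : \bar R) : R := if ((s x)%:E <= t)%E then 1 else 0.
Definition numer (t : \bar R) (l : R) : R :=
  \sum_(i < n) wc i * Lc i * ind (zc i).1 t + wt * l * ind zt.1 t.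
Definition Fw (t : \bar R) (l : R) : R := numer t l / wsum.
Definition Mset : set R := [set s (zc i).1 | i in [set: 'I_n]] `|` [set s zt.1].
(* t_gamma(l) = max {t in M : F(t;l) <= gamma}, max of empty set = -oo
   (a sup over a finite set, i.e. the max) *)
Definition t_gamma (l : R) : \bar R :=
  ereal_sup [set t%:E | t in [set t | Mset t /\ Fw t%:E l <= gamma]].
(* the term inside the infimum; x/0 = +oo for x > 0, and the term is 0
   when the indicator 1{s(X_{n+1}) <= t_gamma(l)} vanishes *)
Definition eterm (l : R) : \bar R :=
  if ((s zt.1)%:E <= t_gamma l)%E then
    (if numer (t_gamma l) l == 0 then +oo%E
     else (wsum / numer (t_gamma l) l)%:E)
  else 0%E.
Definition unit_interval : set R := [set l | 0 <= l <= 1].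
Definition evalue : \bar R :=
  if ereal_inf [set t_gamma l | l in unit_interval] == -oo%E then 0%E
  else ereal_inf [set eterm l | l in unit_interval].
End WeightedEvalue.

(* Z_0,...,Z_{n-1} (calibration) and Zt (test) mutually independent:
   product rule for every family of measurable events (taking A i = setT
   gives the rule for every subfamily). *)
Definition mutually_independent {R : realType} {dO : measure_display}
  {Omega : measurableType dO} (Pr : probability Omega R)
  {dZ : measure_display} {Z : measurableType dZ}
  (n : nat) (Zc : 'I_n -> Omega -> Z) (Zt : Omega -> Z) : Prop :=
  forall (A : 'I_n -> set Z) (B : set Z),
    (forall i, measurable (A i)) -> measurable B ->
    Pr ((\bigcap_(i in [set: 'I_n]) (Zc i @^-1` A i)) `&` (Zt @^-1` B)) =
    (\prod_(i < n) Pr (Zc i @^-1` A i) * Pr (Zt @^-1` B))%E.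

(* Main.v *)
Require Import Defs.
From HB Require Import structures.
From mathcomp Require Import all_boot all_order all_algebra.
From mathcomp Require Import all_classical all_reals all_analysis.
From mathcomp Require Import measurable_realfun.
Import Order.TTheory GRing.Theory Num.Theory.
Local Open Scope classical_set_scope.
Local Open Scope ring_scope.
Import HBNNSimple.
Section density.
Local Open Scope ereal_scope.
Context d (T : measurableType d) (R : realType) (m : {measure set T -> \bar R}) (g : T -> R).
Hypotheses (mg : measurable_fun setT g) (g0 : forall x, (0 <= g x)%R).

Definition dens (A : set T) := \int[m]_(x in A) (g x)%:E.
Let dens0 : dens set0 = 0. Proof. by rewrite /dens integral_set0. Qed.
Let dens_ge0 A : 0 <= dens A.
Proof. by apply: integral_ge0 => x _; rewrite lee_fin. Qed.
Let dens_sa : semi_sigma_additive dens.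
Proof.
apply: semi_sigma_additive_nng_induced; last by move=> x; rewrite lee_fin.
exact/measurable_EFinP.
Qed.
HB.instance Definition _ := isMeasure.Build _ _ _ dens dens0 dens_ge0 dens_sa.
Definition mdens : {measure set T -> \bar R} := dens.

Lemma integral_dens f : (forall x, 0 <= f x) -> measurable_fun setT f ->
  \int[m]_x (f x * (g x)%:E) = \int[mdens]_x f x.
Proof.
move=> f0 mf.
pose h := nnsfun_approx measurableT mf.
have -> : \int[mdens]_x f x =
    lim (\int[mdens]_x (EFin \o h n) x @[n --> \oo]).
  have fE x : f x = lim ((EFin \o h n) x @[n --> \oo]).
    by apply/esym/cvg_lim => //; exact: cvg_nnsfun_approx.
  under eq_integral => x _ do rewrite fE.
  apply: monotone_convergence => //.
  - move=> n; apply/measurable_EFinP.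
    by apply: (measurable_funS measurableT) => //; exact/measurable_funP.
  - by move=> n x Ex //=; rewrite lee_fin.
  - by move=> x Ex a b ab; rewrite lee_fin; exact/lefP/nd_nnsfun_approx.
have -> : \int[m]_x (f x * (g x)%:E) =
    lim (\int[m]_x ((EFin \o h n) x * (g x)%:E) @[n --> \oo]).
  have fg x : f x * (g x)%:E = lim (((EFin \o h n) x * (g x)%:E) @[n --> \oo]).
    by apply/esym/cvg_lim => //; apply: cvgeZr => //; exact: cvg_nnsfun_approx.
  under eq_integral => x _ do rewrite fg.
  apply: monotone_convergence => [//| | |].
  - move=> n; apply/emeasurable_funM; apply/measurable_funTS.
      exact/measurable_EFinP.
    exact/measurable_EFinP.
  - by move=> n x Ex /=; rewrite mule_ge0 ?lee_fin.
  - by move=> x Ex a b ab/=; rewrite lee_wpmul2r ?lee_fin//; exact/lefP/nd_nnsfun_approx.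
suff suf n : \int[m]_x ((EFin \o h n) x * (g x)%:E) =
    \int[mdens]_x (EFin \o h n) x.
  by under eq_fun do rewrite suf.
transitivity (\int[mdens]_x
   (\sum_(y \in range (h n)) (y * \1_(h n @^-1` [set y]) x)%:E)); last first.
  by apply: eq_integral => t tE; rewrite /= fimfunE -fsumEFin.
have indich k r : measurable_fun setT (fun x => (r * \1_(h k @^-1` [set r]) x)%:E).
  by apply: (measurable_comp measurableT) => //; exact: measurable_funM.
rewrite ge0_integral_fsum//; last by move=> k y Ey; exact: nnfun_muleindic_ge0.
transitivity (\int[m]_x (\sum_(y \in range (h n))
    (y * \1_(h n @^-1` [set y]) x)%:E * (g x)%:E)).
  under [RHS]eq_integral => x xE.
    rewrite -ge0_mule_fsuml => [|y]; last exact: nnfun_muleindic_ge0.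
    rewrite fsumEFin // -(fimfunE _ x); over.
  by [].
rewrite ge0_integral_fsum//; last 2 first.
  - move=> y; apply: emeasurable_funM => //.
    exact/measurable_EFinP.
  - move=> k y Ey; apply: mule_ge0; last by rewrite lee_fin.
    by rewrite EFinM; exact: nnfun_muleindic_ge0.
apply: eq_fsbigr => r rhn.
under [RHS]eq_integral do rewrite EFinM.
rewrite integralZl_indic_nnsfun => //.
under eq_integral do rewrite EFinM -muleA.
rewrite ge0_integralZl//.
- under eq_integral do rewrite muleC.
  rewrite (eq_integral ((EFin \o g) \_ (h n @^-1` [set r]))); last first.
    by move=> x xE; rewrite epatch_indic.
  rewrite -integral_mkcondr /=; congr (_ * _).
  rewrite (@integral_indic _ _ _ mdens) ?setTI//.
  by rewrite setIT.
- apply: emeasurable_funM; first exact/measurable_EFinP.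
  exact/measurable_EFinP.
- by move=> t Et; rewrite mule_ge0 ?lee_fin.
- by move: rhn; rewrite inE => -[t _ <-]; rewrite lee_fin.
Qed.
End density.
Section rect.
Context d (T : measurableType d) (k : nat).
Definition rect (A : 'I_k -> set T) : set (k.-tuple T) :=
  [set z | forall i, A i (tnth z i)].
Definition rects := [set rect A | A in [set A : 'I_k -> set T | forall i, measurable (A i)]].

Lemma rect_measurable A : (forall i, measurable (A i)) -> measurable (rect A).
Proof.
move=> mA.
have -> : rect A = \bigcap_(i in setT) ((@tnth k T)^~ i @^-1` A i).
  by apply/seteqP; split => z /= Hz i; [move=> _|]; apply: Hz.
apply: fin_bigcap_measurable => // i _.
by rewrite -[X in measurable X]setTI; exact: measurable_tnth.
Qed.

Lemma tuple_measurableE : @measurable _ (k.-tuple T) = <<s rects >>.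
Proof.
apply/seteqP; split.
- apply: smallest_sub; first exact: smallest_sigma_algebra.
  move=> X; rewrite -bigcup_seq/= => -[i _ [Y mY <-]].
  apply: sub_sigma_algebra.
  exists (fun j => if j == i then Y else setT).
    by move=> j /=; case: eqP.
  apply/seteqP; split => z /=.
    by move=> Hz; split => //; have := Hz i; rewrite eqxx.
  by move=> [_ Hz] j; case: eqP => // ->.
- apply: smallest_sub; first exact: sigma_algebra_measurable.
  by move=> _ [A mA <-]; exact: rect_measurable.
Qed.

Lemma tuple_measure_unique (R : realType) (m1 m2 : {measure set (k.-tuple T) -> \bar R}) :
  (forall A, (forall i, measurable (A i)) -> m1 (rect A) = m2 (rect A)) ->
  (m1 setT < +oo)%E -> forall B, measurable B -> m1 B = m2 B.
Proof.
move=> H1 H2 B mB.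
apply: (measure_unique rects (fun=> setT)) => //.
- exact: tuple_measurableE.
- move=> _ _ [A mA <-] [C mC <-]; exists (fun i => A i `&` C i).
    by move=> i; apply: measurableI; [exact: mA|exact: mC].
  by apply/seteqP; split => z /=; [move=> H; split => i; case: (H i)|
    move=> [Ha Hc] i; split].
- move=> _; exists (fun=> setT) => //.
  by apply/seteqP; split.
- by rewrite bigcup_const.
- by move=> _ [A mA <-]; exact: H1.
Qed.
End rect.
Arguments rect {d T k}.
Arguments rects {d T k}.
Arguments tuple_measure_unique {d T k R}.

Section swapint.
Local Open Scope ereal_scope.
Context d dV (O : measurableType d) (V : measurableType dV) (R : realType).
Variables (m : {measure set O -> \bar R}) (g : O -> R) (F1 F2 : O -> V).
Hypotheses (mg : measurable_fun setT g) (g0 : forall x, (0 <= g x)%R).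
Hypotheses (mF1 : measurable_fun setT F1) (mF2 : measurable_fun setT F2).
Hypothesis H : forall A, measurable A ->
  \int[m]_(x in F1 @^-1` A) (g x)%:E = \int[m]_(x in F2 @^-1` A) (g x)%:E.

Lemma swap_integral (f : V -> \bar R) : (forall x, 0 <= f x) -> measurable_fun setT f ->
  \int[m]_x (f (F1 x) * (g x)%:E) = \int[m]_x (f (F2 x) * (g x)%:E).
Proof.
move=> f0 mf.
have mfF1 : measurable_fun setT (f \o F1) by exact: measurableT_comp.
have mfF2 : measurable_fun setT (f \o F2) by exact: measurableT_comp.
rewrite (@integral_dens _ _ _ m g mg g0 (f \o F1))//.
rewrite (@integral_dens _ _ _ m g mg g0 (f \o F2))//.
have E1 := ge0_integral_pushforward mF1 (@mdens _ _ _ m g mg g0) measurableT mf (fun y _ => f0 y).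
have E2 := ge0_integral_pushforward mF2 (@mdens _ _ _ m g mg g0) measurableT mf (fun y _ => f0 y).
rewrite preimage_setT in E1 E2.
rewrite -E1 -E2; apply: eq_measure_integral => A mA _.
  exact: H.
by move=> x; apply: f0.
by move=> x; apply: f0.
Qed.
End swapint.
Lemma indic_ge0' (T : Type) (R : realType) (E : set T) x : (0 <= (\1_E x : R))%R.
Proof. by rewrite indicE; case: (x \in E). Qed.

Lemma integral_setI_dens d (T : measurableType d) (R : realType)
  (m : {measure set T -> \bar R}) (E D : set T) (mE : measurable E) (mD : measurable D)
  (f : T -> \bar R) : (forall x, (0 <= f x)%E) -> measurable_fun setT f ->
  (\int[m]_(x in D `&` E) f x =
   \int[@mdens _ _ _ m (\1_E) (@measurable_indic _ _ R setT E mE) (@indic_ge0' T R E)]_(x in D) f x)%E.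
Proof.
move=> f0 mf.
rewrite integral_mkcond [RHS]integral_mkcond -integral_dens //.
- apply: eq_integral => x _; rewrite /patch in_setI indicE.
  by case: (x \in D); case: (x \in E) => /=; rewrite ?mule1 ?mule0.
- by move=> x; rewrite /patch; case: ifP.
- apply/(measurable_restrictT _ mD).
  exact: measurable_funTS.
Qed.

Section mainmeas.
Context (R : realType) (d1 d2 dO : measure_display)
  (X : measurableType d1) (Y : measurableType d2)
  (Omega : measurableType dO) (Pr : probability Omega R)
  (P Q : probability (X * Y)%type R)
  (w : X -> R) (n : nat)
  (Zc : 'I_n -> Omega -> X * Y) (Zt : Omega -> X * Y).
Hypotheses (mw : measurable_fun setT w) (w0 : forall x, 0 < w x)
  (HQ : forall A, measurable A -> Q A = (\int[P]_(z in A) (w z.1)%:E)%E)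
  (mZc : forall i, measurable_fun setT (Zc i)) (mZt : measurable_fun setT Zt)
  (HZc : forall i A, measurable A -> Pr (Zc i @^-1` A) = P A)
  (HZt : forall A, measurable A -> Pr (Zt @^-1` A) = Q A)
  (indep : mutually_independent Pr Zc Zt).

Local Notation T := (X * Y)%type.
Definition Phi (o : Omega) : (n.+1).-tuple T := [tuple of Zt o :: [tuple Zc i o | i < n]].
Definition sig (j : 'I_n) (k : 'I_n.+1) : 'I_n.+1 :=
  if k == ord0 then lift ord0 j else if k == lift ord0 j then ord0 else k.
Definition tau j (z : (n.+1).-tuple T) : (n.+1).-tuple T := [tuple tnth z (sig j k) | k < n.+1].

Lemma tnth_Phi0 o : tnth (Phi o) ord0 = Zt o.
Proof. by []. Qed.
Lemma tnth_PhiS o i : tnth (Phi o) (lift ord0 i) = Zc i o.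
Proof. by rewrite tnthS tnth_mktuple. Qed.
Lemma tnth_tau j z k : tnth (tau j z) k = tnth z (sig j k).
Proof. by rewrite tnth_mktuple. Qed.

Lemma mPhi : measurable_fun setT Phi.
Proof.
apply: measurable_cons => //.
apply/measurable_fun_tnthP => i.
rewrite (_ : _ \o _ = Zc i) //.
by apply/funext => o /=; rewrite tnth_mktuple.
Qed.

Lemma mtau j : measurable_fun setT (tau j).
Proof.
apply/measurable_fun_tnthP => k.
rewrite (_ : _ \o _ = (@tnth _ T)^~ (sig j k)); first exact: measurable_tnth.
by apply/funext => z /=; rewrite tnth_mktuple.
Qed.

Lemma mpre (f : Omega -> T) (B : set T) : measurable_fun setT f -> measurable B -> measurable (f @^-1` B).
Proof. by move=> mf mB; rewrite -[X in measurable X]setTI; exact: mf. Qed.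

Lemma Phi_rect A : Phi @^-1` rect A =
  (\bigcap_(i in setT) (Zc i @^-1` A (lift ord0 i))) `&` (Zt @^-1` A ord0).
Proof.
apply/seteqP; split => o /=.
  move=> H; split; last by have := H ord0.
  by move=> i _ /=; have := H (lift ord0 i); rewrite tnth_PhiS.
move=> [H1 H2] k; case: (unliftP ord0 k) => [i ->|->] //.
by rewrite tnth_PhiS; exact: H1.
Qed.

Lemma key j A (mA : forall k, measurable (A k)) :
  (\int[Pr]_(o in Phi @^-1` rect A) (w (Zc j o).1)%:E =
  Q (A ord0) * Q (A (lift ord0 j)) * \prod_(i < n | i != j) P (A (lift ord0 i)))%E.
Proof.
pose A' := fun i => if i == j then setT else A (lift ord0 i).
pose E := (\bigcap_(i in setT) (Zc i @^-1` A' i)) `&` (Zt @^-1` A ord0).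
have mA' : forall i, measurable (A' i) by move=> i; rewrite /A'; case: eqP.
have mE : measurable E.
  apply: measurableI; last exact: mpre.
  by apply: fin_bigcap_measurable => // i _; exact: mpre.
have PhiE : Phi @^-1` rect A = (Zc j @^-1` A (lift ord0 j)) `&` E.
  rewrite Phi_rect; apply/seteqP; split => o /=.
    move=> [H1 H2]; split; first exact: H1.
    by split => // i _; rewrite /A'; case: eqP => // _; exact: H1.
  move=> [H1 [H2 H3]]; split => // i _.
  have [->//|ij] := eqVneq i j.
  by have := H2 i Logic.I; rewrite /A' (negbTE ij).
have PrEB : forall B, measurable B ->
    Pr (Zc j @^-1` B `&` E) = (P B * (\prod_(i < n | i != j) P (A (lift ord0 i))) * Q (A ord0))%E.
  move=> B mB.
  pose A'' := fun i => if i == j then B else A (lift ord0 i).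
  have mA'' : forall i, measurable (A'' i) by move=> i; rewrite /A''; case: eqP.
  have -> : Zc j @^-1` B `&` E = (\bigcap_(i in setT) (Zc i @^-1` A'' i)) `&` (Zt @^-1` A ord0).
    apply/seteqP; split => o /=.
      move=> [H1 [H2 H3]]; split => // i _.
      rewrite /A''; case: eqP => [->//|/eqP ij].
      by have := H2 i Logic.I; rewrite /A' (negbTE ij).
    move=> [H2 H3]; split; first by have := H2 j Logic.I; rewrite /A'' eqxx.
    split => // i _; rewrite /A'; case: eqP => // /eqP ij.
    by have := H2 i Logic.I; rewrite /A'' (negbTE ij).
  rewrite indep // HZt //; congr (_ * _)%E.
  rewrite (bigD1 j) //= HZc // /A'' eqxx; congr (_ * _)%E.
  apply: eq_bigr => i ij; rewrite HZc // /A'' (negbTE ij) //.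
have PrE : Pr E = ((\prod_(i < n | i != j) P (A (lift ord0 i))) * Q (A ord0))%E.
  by rewrite -[E]setTI -(preimage_setT (Zc j)) PrEB // probability_setT mul1e.
have mwf : measurable_fun setT (fun z : T => (w z.1)%:E).
  by apply/measurable_EFinP; apply: measurableT_comp => //.
have wf0 : forall z : T, (0 <= (w z.1)%:E)%E by move=> z; rewrite lee_fin ltW.
have mB := mA (lift ord0 j).
rewrite PhiE (@integral_setI_dens _ _ R Pr _ _ mE (mpre _ _ (mZc j) mB)); last 2 first.
- by move=> o; exact: wf0.
- exact: (measurableT_comp mwf (mZc j)).
set rho := @mdens _ _ _ _ _ _ _.
have E1 := ge0_integral_pushforward (mZc j) rho mB (measurable_funTS mwf) (fun y _ => wf0 y).
rewrite /= in E1; rewrite -E1.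
have cge0 : (0 <= fine (Pr E))%R by apply: fine_ge0; exact: measure_ge0.
have finE : Pr E \is a fin_num by apply: fin_num_measure.
rewrite (eq_measure_integral (mscale (NngNum cge0) P)); last first.
  move=> C mC _; change ((@dens _ _ R Pr (\1_E)) (Zc j @^-1` C) = mscale (NngNum cge0) P C); rewrite /dens integral_indic //; last exact: mpre.
  by rewrite /mscale /= fineK // setIC PrEB // PrE [RHS]muleC muleA.
rewrite ge0_integral_mscale //; last exact: measurable_funTS.
rewrite -HQ // /= fineK // PrE.
by rewrite [X in (X * _)%E]muleC -muleA [X in (_ * X)%E]muleC muleA.
Qed.

Lemma lift0_neq0 (j : 'I_n) : (lift ord0 j == ord0 :> 'I_n.+1) = false.
Proof. by apply/negbTE; rewrite eq_sym neq_lift. Qed.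

Lemma sig0 j : sig j ord0 = lift ord0 j.
Proof. by rewrite /sig eqxx. Qed.
Lemma sigj j : sig j (lift ord0 j) = ord0.
Proof. by rewrite /sig lift0_neq0 eqxx. Qed.
Lemma sigi j i : i != j -> sig j (lift ord0 i) = lift ord0 i.
Proof.
move=> ij; rewrite /sig lift0_neq0.
by rewrite (inj_eq (@lift_inj _ ord0)) (negbTE ij).
Qed.
Lemma sigK j k : sig j (sig j k) = k.
Proof.
case: (unliftP ord0 k) => [i ->|->]; last by rewrite sig0 sigj.
have [->|ij] := eqVneq i j; first by rewrite sigj sig0.
by rewrite !sigi.
Qed.

Lemma tau_rect j A : tau j @^-1` rect A = rect (fun k => A (sig j k)).
Proof.
apply/seteqP; split => z /= H k.
  by have := H (sig j k); rewrite tnth_tau sigK.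
by rewrite tnth_tau; have := H (sig j k); rewrite sigK.
Qed.

Lemma exch j (F : (n.+1).-tuple T -> \bar R) :
  (forall z, (0 <= F z)%E) -> measurable_fun setT F ->
  (\int[Pr]_o (F (Phi o) * (w (Zc j o).1)%:E) =
   \int[Pr]_o (F (tau j (Phi o)) * (w (Zc j o).1)%:E))%E.
Proof.
move=> F0 mF.
have mg : measurable_fun setT (fun o => w (Zc j o).1).
  by apply: measurableT_comp => //; apply: measurableT_comp => //.
have g0 : forall o, (0 <= w (Zc j o).1)%R by move=> o; exact: ltW.
have mtP : measurable_fun setT (tau j \o Phi) by apply: measurableT_comp; [exact: mtau|exact: mPhi].
apply: (@swap_integral _ _ _ _ R Pr (fun o => w (Zc j o).1) Phi (tau j \o Phi) mg g0 mPhi mtP) => //.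
move=> B mB.
pose m1 := pushforward (@mdens _ _ _ Pr _ mg g0) Phi.
pose m2 := pushforward (@mdens _ _ _ Pr _ mg g0) (tau j \o Phi).
have Hm1 : forall C, m1 C = (\int[Pr]_(x in Phi @^-1` C) (w (Zc j x).1)%:E)%E by [].
have Hm2 : forall C, m2 C = (\int[Pr]_(x in (tau j \o Phi) @^-1` C) (w (Zc j x).1)%:E)%E by [].
rewrite -Hm1 -Hm2.
apply: (tuple_measure_unique m1 m2) => //; first exact: mPhi.
- move=> mP A mA; change (m1 (rect A) = m2 (rect A)); rewrite Hm1 Hm2 comp_preimage tau_rect key // key; last first.
    by move=> k; exact: mA.
  rewrite sig0 sigj [X in (X * _)%E]muleC; congr (_ * _)%E.
  by apply: eq_bigr => i ij; rewrite sigi.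
- move=> mP; change (m1 setT < +oo)%E; have -> : [set: (n.+1).-tuple T] = rect (fun=> setT) by apply/seteqP; split.
  rewrite Hm1 key // !probability_setT big1 ?mul1e ?ltry //.
Qed.
End mainmeas.
Section comb.
Context {R : realType} {d1 d2 : measure_display}
  {X : measurableType d1} {Y : measurableType d2}.
Variables (w : X -> R) (s : X -> R) (loss : X -> Y -> R) (gamma : R) (n : nat).
Hypotheses (w0 : forall x, 0 < w x) (l01 : forall x y, 0 <= loss x y <= 1).

Local Notation T := (X * Y)%type.
Implicit Types z : (n.+1).-tuple T.

Definition wk k z := w (tnth z k).1.
Definition Lk k z := loss (tnth z k).1 (tnth z k).2.
Definition sk k z := s (tnth z k).1.
Definition Nt (t : \bar R) z := \sum_(k < n.+1) wk k z * Lk k z * ((sk k z)%:E <= t)%E%:R.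
Definition Wz z := \sum_(k < n.+1) wk k z.
Definition okk k z : bool := Nt (sk k z)%:E z <= gamma * Wz z.
Definition Dz z := \sum_(k < n.+1) wk k z * Lk k z * (okk k z)%:R.
Definition hk k z := Lk k z * (okk k z)%:R / Dz z.

Lemma wk_gt0 k z : 0 < wk k z. Proof. exact: w0. Qed.
Lemma Lk_ge0 k z : 0 <= Lk k z. Proof. by case/andP: (l01 (tnth z k).1 (tnth z k).2). Qed.
Lemma Lk_le1 k z : Lk k z <= 1. Proof. by case/andP: (l01 (tnth z k).1 (tnth z k).2). Qed.
Lemma Wz_gt0 z : 0 < Wz z.
Proof.
rewrite /Wz big_ord_recl ltr_wpDr ?wk_gt0 //.
by apply: sumr_ge0 => i _; exact/ltW/wk_gt0.
Qed.
Lemma Dz_ge0 z : 0 <= Dz z.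
Proof.
by apply: sumr_ge0 => k _; rewrite !mulr_ge0 ?ler0n ?Lk_ge0 //; exact/ltW/wk_gt0.
Qed.
Lemma hk_ge0 k z : 0 <= hk k z.
Proof. by rewrite /hk !mulr_ge0 ?ler0n ?Lk_ge0 ?invr_ge0 ?Dz_ge0. Qed.

Lemma Nt_mono z t t' : (t <= t')%E -> Nt t z <= Nt t' z.
Proof.
move=> tt'; apply: ler_sum => k _; apply: ler_wpM2l.
  by rewrite mulr_ge0 ?Lk_ge0 //; exact/ltW/wk_gt0.
have [H|_] := boolP ((sk k z)%:E <= t)%E; last by rewrite ler0n.
by rewrite (le_trans H tt').
Qed.

Lemma sum_wh z : \sum_(k < n.+1) wk k z * hk k z <= 1.
Proof.
have -> : \sum_(k < n.+1) wk k z * hk k z = Dz z / Dz z.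
  by rewrite /Dz mulr_suml; apply: eq_bigr => k _; rewrite /hk !mulrA.
have [->|D0] := eqVneq (Dz z) 0; first by rewrite mul0r ler01.
by rewrite divff.
Qed.

Variables (zc : 'I_n -> X * Y) (zt : X * Y).
Definition tz : (n.+1).-tuple T := [tuple of zt :: [tuple zc i | i < n]].
Lemma tz0 : tnth tz ord0 = zt. Proof. by []. Qed.
Lemma tzS i : tnth tz (lift ord0 i) = zc i.
Proof. by rewrite tnthS tnth_mktuple. Qed.

Lemma WzE : Wz tz = wsum w zc zt.
Proof.
rewrite /Wz big_ord_recl /wsum [RHS]addrC; congr (_ + _).
by apply: eq_bigr => i _; rewrite /wk tzS.
Qed.

Local Notation L := (loss zt.1 zt.2).

Lemma numerE t : numer w s loss zc zt t L = Nt t tz.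
Proof.
rewrite /numer /Nt big_ord_recl [RHS]addrC; congr (_ + _).
  apply: eq_bigr => i _; rewrite /wk /Lk /sk tzS /wc /Lc /ind.
  by case: ifP.
by rewrite /wk /Lk /sk tz0 /wt /ind; case: ifP.
Qed.

Lemma MsetE t : Mset s zc zt t <-> exists k, t = sk k tz.
Proof.
split.
  case=> [[i _ <-]|->]; last by exists ord0.
  by exists (lift ord0 i); rewrite /sk tzS.
case=> k ->; case: (unliftP ord0 k) => [i ->|->].
  by left; exists i => //; rewrite /sk tzS.
by right.
Qed.

Lemma FwE t : (Fw w s loss zc zt t%:E L <= gamma) = (Nt t%:E tz <= gamma * Wz tz).
Proof. by rewrite /Fw numerE -WzE ler_pdivrMr ?Wz_gt0 // mulrC. Qed.

Lemma okE k : ((sk k tz)%:E <= t_gamma w s loss gamma zc zt L)%E = okk k tz.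
Proof.
apply/idP/idP.
- move=> H; apply/negPn/negP => /negP nok.
  pose b := \big[Order.max/(sk k tz - 1)]_(m | okk m tz) sk m tz.
  have bk : b < sk k tz.
    apply: bigmax_lt; first by rewrite ltrBlDr ltrDl ltr01.
    move=> m okm; rewrite ltNge; apply/negP => km; apply: nok.
    by rewrite /okk; apply: le_trans okm; apply: Nt_mono; rewrite lee_fin.
  have tb : (t_gamma w s loss gamma zc zt L <= b%:E)%E.
    apply/ereal_supP => _ [t [Mt Ft] <-]; rewrite lee_fin.
    have [m tm] := (MsetE t).1 Mt.
    rewrite tm FwE in Ft *; rewrite -/(okk m tz) in Ft.
    exact: le_bigmax_cond.
  by have := le_trans H tb; rewrite lee_fin leNgt bk.
- move=> okk0; apply: ereal_sup_ubound; exists (sk k tz) => //; split.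
    by apply/MsetE; exists k.
  by rewrite FwE.
Qed.

Lemma pointwise : ((loss zt.1 zt.2)%:E * evalue w s loss gamma zc zt <= (Wz tz * hk ord0 tz)%:E)%E.
Proof.
have /andP[L0 L1] := l01 zt.1 zt.2.
have rhs0 : 0 <= Wz tz * hk ord0 tz by rewrite mulr_ge0 ?hk_ge0 // ltW // Wz_gt0.
rewrite /evalue; case: ifP => _; first by rewrite mule0 lee_fin.
apply: (@le_trans _ _ (L%:E * eterm w s loss gamma zc zt L)%E).
  apply: lee_wpmul2l; first by rewrite lee_fin.
  apply: ge_ereal_inf; exists (eterm w s loss gamma zc zt L) => //.
  by exists L => //; rewrite /unit_interval /= L0 L1.
rewrite /eterm; case: ifP => Hs; last by rewrite mule0 lee_fin.
have ok0 : okk ord0 tz by rewrite -okE.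
have DE : numer w s loss zc zt (t_gamma w s loss gamma zc zt L) L = Dz tz.
  by rewrite numerE /Nt /Dz; apply: eq_bigr => k _; rewrite okE.
have LkE : Lk ord0 tz = L by [].
rewrite DE; case: ifP => /eqP D0.
  have LL : L = 0.
    apply/le_anti; rewrite L0 andbT.
    have : wk ord0 tz * L <= Dz tz.
      rewrite /Dz big_ord_recl ok0 mulr1 lerDl.
      by apply: sumr_ge0 => k _; rewrite !mulr_ge0 ?ler0n ?Lk_ge0 //; exact/ltW/wk_gt0.
    by rewrite D0 pmulr_rle0 // wk_gt0.
  by rewrite LL mul0e lee_fin.
by rewrite -EFinM lee_fin /hk ok0 LkE WzE mulr1 mulrCA.
Qed.
End comb.

Import numFieldNormedType.Exports.
Lemma measurable_inv (R : realType) : measurable_fun setT (@GRing.inv R).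
Proof.
have cl0 : closed [set (0:R)].
  apply: compact_closed; first exact: Rhausdorff.
  by apply: finite_compact; exact: finite_set1.
have mU : measurable_fun (~` [set (0:R)]) (@GRing.inv R).
  apply: open_continuous_measurable_fun; first by rewrite openC.
  move=> x /set_mem /= x0; apply: inv_continuous; exact/eqP.
have m0 : measurable_fun [set (0:R)] (@GRing.inv R).
  move=> _ Y mY.
  have [Y0|Y0] := pselect (Y (0:R)^-1).
    by rewrite (_ : _ `&` _ = [set 0]) //; apply/seteqP; split => x /=;
      [case=> ->|move=> ->].
  by rewrite (_ : _ `&` _ = set0) //; apply/seteqP; split => x //= [->].
rewrite -(setUv [set (0:R)]); apply/measurable_funU => //.
exact: measurableC.
Qed.
Lemma ge0_le_integral_nm d (T : measurableType d) (R : realType)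
  (mu : {measure set T -> \bar R}) (f g : T -> \bar R) :
  (forall x, (0 <= f x)%E) -> (forall x, (f x <= g x)%E) ->
  (\int[mu]_x f x <= \int[mu]_x g x)%E.
Proof.
move=> f0 fg.
have g0 : forall x, (0 <= g x)%E by move=> x; exact: le_trans (f0 x) (fg x).
rewrite !ge0_integralTE //.
apply: le_ereal_sup => _ [h Hh <-]; exists h => //.
by move=> x; exact: le_trans (Hh x) (fg x).
Qed.
Arguments Phi {d1 d2 dO X Y Omega n}.
Arguments tau {d1 d2 X Y n}.
Arguments sig {n}.
Arguments sigK {n}.
Arguments sig0 {n}.
Arguments tnth_tau {d1 d2 X Y n}.

Section symm.
Context {R : realType} {d1 d2 : measure_display} {X : measurableType d1} {Y : measurableType d2}.
Variables (w s : X -> R) (loss : X -> Y -> R) (gamma : R) (n : nat).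
Local Notation T := (X * Y)%type.
Implicit Types z : (n.+1).-tuple T.

Lemma sum_sig j (F : 'I_n.+1 -> R) : \sum_(k < n.+1) F (sig j k) = \sum_(k < n.+1) F k.
Proof. by rewrite [RHS](reindex_inj (can_inj (sigK (n:=n) j))). Qed.

Lemma Nt_tau j t z : Nt w s loss n t (tau j z) = Nt w s loss n t z.
Proof.
rewrite /Nt -[in RHS](sum_sig j); apply: eq_bigr => k _.
by rewrite /wk /Lk /sk tnth_tau.
Qed.
Lemma Wz_tau j z : Wz w n (tau j z) = Wz w n z.
Proof.
rewrite /Wz -[in RHS](sum_sig j); apply: eq_bigr => k _.
by rewrite /wk tnth_tau.
Qed.
Lemma okk_tau j k z : okk w s loss gamma n k (tau j z) = okk w s loss gamma n (sig j k) z.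
Proof. by rewrite /okk Nt_tau Wz_tau /sk tnth_tau. Qed.
Lemma Dz_tau j z : Dz w s loss gamma n (tau j z) = Dz w s loss gamma n z.
Proof.
rewrite /Dz -[in RHS](sum_sig j); apply: eq_bigr => k _.
by rewrite /wk /Lk okk_tau tnth_tau.
Qed.
Lemma hk_tau j z : hk w s loss gamma n ord0 (tau j z) = hk w s loss gamma n (lift ord0 j) z.
Proof. by rewrite /hk Dz_tau okk_tau /Lk tnth_tau sig0. Qed.
End symm.

Section meas.
Context {R : realType} {d1 d2 : measure_display} {X : measurableType d1} {Y : measurableType d2}.
Variables (w s : X -> R) (loss : X -> Y -> R) (gamma : R) (n : nat).
Hypotheses (mw : measurable_fun setT w) (ms : measurable_fun setT s)
  (mloss : measurable_fun setT (fun z : X * Y => loss z.1 z.2)).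
Local Notation T := (X * Y)%type.
Local Notation V := ((n.+1).-tuple T).

Lemma mle (f g : V -> R) : measurable_fun setT f -> measurable_fun setT g ->
  measurable_fun setT (fun z => ((f z <= g z)%R%:R : R)).
Proof.
move=> mf mg.
apply: (@measurableT_comp _ _ _ _ _ _ (fun b : bool => (b%:R : R))); last first.
  exact: measurable_fun_ler.
by move=> _ Y0 _.
Qed.

Lemma mwk k : measurable_fun setT (fun z : V => wk w n k z).
Proof. exact: measurableT_comp mw (measurableT_comp measurable_fst (measurable_tnth k)). Qed.
Lemma mLk k : measurable_fun setT (fun z : V => Lk loss n k z).
Proof. by apply: measurableT_comp mloss _; exact: measurable_tnth. Qed.
Lemma msk k : measurable_fun setT (fun z : V => sk s n k z).
Proof. exact: measurableT_comp ms (measurableT_comp measurable_fst (measurable_tnth k)). Qed.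

Lemma mNt m : measurable_fun setT (fun z : V => Nt w s loss n (sk s n m z)%:E z).
Proof.
rewrite /Nt; apply: measurable_sum => k.
apply: measurable_funM; first exact: measurable_funM (mwk k) (mLk k).
rewrite (_ : (fun _ => _) = (fun z : V => ((sk s n k z <= sk s n m z)%R%:R : R))).
  exact: mle (msk k) (msk m).
by apply/funext => z; rewrite lee_fin.
Qed.
Lemma mWz : measurable_fun setT (fun z : V => Wz w n z).
Proof. by apply: measurable_sum => k; exact: mwk. Qed.
Lemma mokk k : measurable_fun setT (fun z : V => ((okk w s loss gamma n k z)%:R : R)).
Proof. by apply: mle; [exact: mNt|apply: measurable_funM => //; exact: mWz]. Qed.
Lemma mDz : measurable_fun setT (fun z : V => Dz w s loss gamma n z).
Proof.
apply: measurable_sum => k.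
by apply: measurable_funM; [exact: measurable_funM (mwk k) (mLk k)|exact: mokk].
Qed.
Lemma mhk k : measurable_fun setT (fun z : V => hk w s loss gamma n k z).
Proof.
apply: measurable_funM; first exact: measurable_funM (mLk k) (mokk k).
exact: measurableT_comp (measurable_inv R) mDz.
Qed.
End meas.

Lemma evalue_ge0 {R : realType} {d1 d2 : measure_display} {X : measurableType d1} {Y : measurableType d2}
  (w s : X -> R) (loss : X -> Y -> R) (gamma : R) (n : nat)
  (w0 : forall x, 0 < w x) (l01 : forall x y, 0 <= loss x y <= 1)
  (zc : 'I_n -> X * Y) (zt : X * Y) : (0 <= evalue w s loss gamma zc zt)%E.
Proof.
have ind0 : forall x t, 0 <= ind s x t by move=> x t; rewrite /ind; case: ifP.
rewrite /evalue; case: ifP => _ //.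
apply/ereal_infP => _ [l /andP[l0 l1] <-].
rewrite /eterm; case: ifP => // _; case: ifP => // _.
rewrite lee_fin divr_ge0 //.
  rewrite /wsum addr_ge0 //; last exact/ltW/w0.
  by apply: sumr_ge0 => i _; exact/ltW/w0.
rewrite /numer addr_ge0 //.
  apply: sumr_ge0 => i _; rewrite !mulr_ge0 //; first exact/ltW/w0.
  by case/andP: (l01 (zc i).1 (zc i).2).
by rewrite !mulr_ge0 //; exact/ltW/w0.
Qed.

Theorem theorem6p1 (R : realType) (d1 d2 dO : measure_display)
  (X : measurableType d1) (Y : measurableType d2)
  (Omega : measurableType dO) (Pr : probability Omega R)
  (P Q : probability (X * Y)%type R)
  (w : X -> R) (s : X -> R) (loss : X -> Y -> R) (n : nat)
  (Zc : 'I_n -> Omega -> X * Y) (Zt : Omega -> X * Y) (gamma : R) :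
  measurable_fun setT w -> (forall x, 0 < w x) ->
  (forall A, measurable A -> Q A = (\int[P]_(z in A) (w z.1)%:E)%E) ->
  measurable_fun setT s ->
  measurable_fun setT (fun z : X * Y => loss z.1 z.2) ->
  (forall x y, 0 <= loss x y <= 1) ->
  (forall i, measurable_fun setT (Zc i)) -> measurable_fun setT Zt ->
  (forall i A, measurable A -> Pr (Zc i @^-1` A) = P A) ->
  (forall A, measurable A -> Pr (Zt @^-1` A) = Q A) ->
  mutually_independent Pr Zc Zt ->
  0 < gamma < 1 ->
  (\int[Pr]_(o in setT)
     ((loss (Zt o).1 (Zt o).2)%:E
      * evalue w s loss gamma (fun i => Zc i o) (Zt o)) <= 1)%E.
Proof.
move=> mw w0 HQ ms mloss l01 mZc mZt HZc HZt indep g01.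
pose h := hk w s loss gamma n.
have mPh : measurable_fun setT (Phi Zc Zt) by exact: mPhi.
have h0 : forall k z, 0 <= h k z by move=> k z; exact: (hk_ge0 w s loss gamma n w0 l01).
have wk0 : forall k (z : (n.+1).-tuple (X * Y)), 0 <= wk w n k z by move=> k z; exact/ltW/w0.
apply: (@le_trans _ _ (\int[Pr]_o (Wz w n (Phi Zc Zt o) * h ord0 (Phi Zc Zt o))%:E)%E).
  apply: ge0_le_integral_nm.
  - move=> o; apply: mule_ge0; last exact: evalue_ge0.
    by rewrite lee_fin; case/andP: (l01 (Zt o).1 (Zt o).2).
  - by move=> o; exact: (pointwise w s loss gamma n w0 l01 (fun i => Zc i o) (Zt o)).
have E1 : forall o, ((Wz w n (Phi Zc Zt o) * h ord0 (Phi Zc Zt o))%:E =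
    \sum_(k < n.+1) (wk w n k (Phi Zc Zt o) * h ord0 (Phi Zc Zt o))%:E)%E.
  by move=> o; rewrite /Wz mulr_suml sumEFin.
under eq_integral => o _ do rewrite E1.
have mwkP : forall k, measurable_fun setT (fun o => wk w n k (Phi Zc Zt o)).
  by move=> k; exact: measurableT_comp (mwk w n mw k) mPh.
have mhP : forall k, measurable_fun setT (fun o => h k (Phi Zc Zt o)).
  by move=> k; exact: measurableT_comp (mhk w s loss gamma n mw ms mloss k) mPh.
rewrite ge0_integral_sum //; first last.
  - by move=> k o _; rewrite lee_fin mulr_ge0.
  - by move=> k; apply/measurable_EFinP; apply: measurable_funM.
rewrite big_ord_recl.
have E2 : forall j : 'I_n,
    (\int[Pr]_o (wk w n (lift ord0 j) (Phi Zc Zt o) * h ord0 (Phi Zc Zt o))%:E =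
     \int[Pr]_o (wk w n (lift ord0 j) (Phi Zc Zt o) * h (lift ord0 j) (Phi Zc Zt o))%:E)%E.
  move=> j.
  transitivity (\int[Pr]_o ((h ord0 (Phi Zc Zt o))%:E * (w (Zc j o).1)%:E))%E.
    by apply: eq_integral => o _; rewrite /wk tnth_PhiS EFinM muleC.
  rewrite (@exch R _ _ _ X Y Omega Pr P Q w n Zc Zt mw w0 HQ mZc mZt HZc HZt indep j
    (fun z => (h ord0 z)%:E)); first last.
  - by apply/measurable_EFinP; exact: (mhk w s loss gamma n mw ms mloss ord0).
  - by move=> z; rewrite lee_fin.
  by apply: eq_integral => o _; rewrite /h hk_tau /wk tnth_PhiS EFinM muleC.
under eq_bigr do rewrite E2.
rewrite (_ : (_ + _)%E = \sum_(k < n.+1) \int[Pr]_o (wk w n k (Phi Zc Zt o) * h k (Phi Zc Zt o))%:E)%E; last by rewrite big_ord_recl.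
rewrite -ge0_integral_sum //; first last.
  - by move=> k o _; rewrite lee_fin mulr_ge0.
  - by move=> k; apply/measurable_EFinP; apply: measurable_funM.
apply: (@le_trans _ _ (\int[Pr]_o (cst 1%E o))%E).
  apply: ge0_le_integral_nm.
  - by move=> o; apply: sume_ge0 => k _; rewrite lee_fin mulr_ge0.
  - by move=> o; rewrite sumEFin lee_fin; exact: (sum_wh w s loss gamma n).
by rewrite integral_cst // mul1e; apply: probability_le1.
Qed.
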